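(* Let $d\ge3$ and $k_d=d^2-1$. Let $M_\Sigma$ be the $(d-1)\times(d-1)$ lower-triangular matrix with entries, for $1\le i,j\le d-1$: $(M_\Sigma)_{ij}=0$ if $j>i$; $(M_\Sigma)_{i1}=\frac{2}{i(i+1)}$; $(M_\Sigma)_{ij}=\frac{1}{i(i+1)}$ if $1<j<i$; $(M_\Sigma)_{ii}=\frac{i}{i+1}$ if $i>1$. Let $M_{k_d}=M_\Sigma\oplus\mathbb{I}_{d(d-1)}$ (a $k_d\times k_d$ block-diagonal row-stochastic matrix). Then $\operatorname{rank}_{\mathrm{psd}}(M_{k_d})=d^2-1$.
   Context: The psd rank of a nonnegative $n\times m$ matrix $M$, $\operatorname{rank}_{\mathrm{psd}}(M)$, is the smallest $r$ such that there exist $r\times r$ positive semidefinite matrices $R_1,\dots,R_n$ and $C_1,\dots,C_m$ with $M_{ij}=\operatorname{Tr}(R_iC_j)$ for all $i,j$. *)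

(* Defs.v *)
From HB Require Import structures.
From mathcomp Require Import all_boot all_order all_algebra.
Set Implicit Arguments. Unset Strict Implicit. Unset Printing Implicit Defensive.
Import Order.TTheory GRing.Theory Num.Theory.
Local Open Scope ring_scope.

Definition psd (R : realFieldType) (r : nat) (A : 'M[R]_r) : Prop :=
  A^T = A /\ forall x : 'cV[R]_r, 0 <= (x^T *m A *m x) 0 0.

Definition has_psd_factorization (R : realFieldType) (n m : nat)
    (M : 'M[R]_(n, m)) (r : nat) : Prop :=
  exists (Rs : 'I_n -> 'M[R]_r) (Cs : 'I_m -> 'M[R]_r),
    (forall i, psd (Rs i)) /\ (forall j, psd (Cs j)) /\
    (forall i j, M i j = \tr (Rs i *m Cs j)).

Definition is_psd_rank (R : realFieldType) (n m : nat)
    (M : 'M[R]_(n, m)) (r : nat) : Prop :=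
  has_psd_factorization M r /\
  (forall r', has_psd_factorization M r' -> (r <= r')%N).

Definition M_Sigma (R : realFieldType) (d : nat) : 'M[R]_(d.-1) :=
  \matrix_(i < d.-1, j < d.-1)
    let a := i.+1 in let b := j.+1 in
    if (a < b)%N then 0
    else if b == 1%N then 2%:R / (a * a.+1)%:R
    else if b == a then a%:R / a.+1%:R
    else 1 / (a * a.+1)%:R.

(* M_{k_d} = M_Sigma (+) I_{d(d-1)}, of size (d-1) + d(d-1) = d^2 - 1. *)
Definition M_kd (R : realFieldType) (d : nat) : 'M[R]_(d.-1 + d * d.-1) :=
  block_mx (M_Sigma R d) 0 0 1%:M.

(* Main.v *)
Require Import Defs.
From HB Require Import structures.
From mathcomp Require Import all_boot all_order all_algebra.
From mathcomp Require Import reals.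
From mathcomp Require Import ring lra zify.
Set Implicit Arguments. Unset Strict Implicit. Unset Printing Implicit Defensive.
Import Order.TTheory GRing.Theory Num.Theory.
Local Open Scope ring_scope.

Section Psd.
Variables (R : realFieldType) (r : nat).
Implicit Types (A B : 'M[R]_r) (x y : 'cV[R]_r).

Definition bf A x y := (x^T *m A *m y) 0 0.

Lemma bfDl A x y z : bf A (x + y) z = bf A x z + bf A y z.
Proof. by rewrite /bf linearD /= !mulmxDl mxE. Qed.
Lemma bfDr A x y z : bf A z (x + y) = bf A z x + bf A z y.
Proof. by rewrite /bf !mulmxDr mxE. Qed.
Lemma bfZl A a x y : bf A (a *: x) y = a * bf A x y.
Proof. by rewrite /bf linearZ /= -!scalemxAl mxE. Qed.
Lemma bfZr A a x y : bf A y (a *: x) = a * bf A y x.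
Proof. by rewrite /bf -!scalemxAr mxE. Qed.
Lemma bfC A x y : A^T = A -> bf A x y = bf A y x.
Proof.
move=> hA; rewrite /bf.
have -> : (x^T *m A *m y) 0 0 = ((x^T *m A *m y)^T) 0 0 by rewrite [RHS]mxE.
by rewrite !trmx_mul trmxK hA mulmxA.
Qed.
Lemma bf_delta_l A i y : bf A (delta_mx i 0) y = (A *m y) i 0.
Proof. by rewrite /bf trmx_delta -mulmxA -rowE mxE. Qed.
Lemma bf_delta A i j : bf A (delta_mx i 0) (delta_mx j 0) = A i j.
Proof. by rewrite bf_delta_l -colE mxE. Qed.

Lemma bf_exp A x y t : A^T = A ->
  bf A (x + t *: y) (x + t *: y) = bf A x x + 2 * t * bf A x y + t * t * bf A y y.
Proof.
move=> hA; rewrite !bfDl !bfDr !bfZl !bfZr (bfC x y hA); ring.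
Qed.

Lemma psd_quad0 A x : psd A -> bf A x x = 0 -> A *m x = 0.
Proof.
move=> [hs hp] hq; apply/matrixP => i j; rewrite (ord1 j) [RHS]mxE.
rewrite -bf_delta_l (bfC _ _ hs).
set s := bf A x (delta_mx i 0); set q := bf A (delta_mx i 0) (delta_mx i 0).
have q0 : 0 <= q by exact: hp.
have := hp (x + (- s / (q + 1)) *: delta_mx i 0).
rewrite -/(bf A _ _) bf_exp // hq -/s -/q => h.
have u0 : 0 < q + 1 by lra.
set t := - s / (q + 1) in h.
have ht : t * (q + 1) = - s by rewrite /t mulfVK // gt_eqF.
have h2 : 0 <= (0 + 2 * t * s + t * t * q) * ((q + 1) * (q + 1)).
  by apply: mulr_ge0 => //; apply: mulr_ge0; lra.
have h3 : (0 + 2 * t * s + t * t * q) * ((q + 1) * (q + 1)) = - (s * s) * (q + 2).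
  have -> : (0 + 2 * t * s + t * t * q) * ((q + 1) * (q + 1)) =
    2 * (t * (q + 1)) * s * (q + 1) + (t * (q+1)) * (t * (q+1)) * q by ring.
  rewrite ht; ring.
rewrite h3 in h2; nra.
Qed.

Lemma psd_diag_ge0 A k : psd A -> 0 <= A k k.
Proof. by move=> [_ hp]; rewrite -bf_delta; exact: hp. Qed.

Lemma psd_sym A i j : psd A -> A i j = A j i.
Proof. by move=> [hs _]; rewrite -{1}hs mxE. Qed.

Lemma psd_zero B : psd B -> (forall k, B k k = 0) -> B = 0.
Proof.
move=> hB h0; apply/matrixP => i j.
have hz := psd_quad0 hB (etrans (bf_delta B j j) (h0 j)).
have := congr1 (fun M : 'cV[R]_r => M i 0) hz; rewrite -colE !mxE => ->.
done.
Qed.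

Definition nzc B := #|[set j | [exists i, B i j != 0]]|.

Lemma outerE (w : 'cV[R]_r) i j : (w *m w^T) i j = w i 0 * w j 0.
Proof. by rewrite mxE big_ord1 mxE. Qed.

Lemma tr11 (M : 'M[R]_1) : \tr M = M 0 0.
Proof. by rewrite /mxtrace big_ord1. Qed.

Lemma psd_tr A B : psd A -> psd B ->
  0 <= \tr (A *m B) /\ (\tr (A *m B) = 0 -> A *m B = 0).
Proof.
move=> hA; move: {2}(nzc B) (leqnn (nzc B)) => n; elim: n B => [|n IH] B hn hB;
  (case: (pickP (fun k => B k k != 0)) => [k hk|h0]; last first).
- by rewrite (psd_zero hB) ?mulmx0 ?mxtrace0 // => k; apply/eqP/negbFE/h0.
- exfalso; suff : (0 < nzc B)%N by rewrite lt0n -leqn0 hn.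
  by apply/card_gt0P; exists k; rewrite inE; apply/existsP; exists k.
- by rewrite (psd_zero hB) ?mulmx0 ?mxtrace0 // => k; apply/eqP/negbFE/h0.
have bk : 0 < B k k by rewrite lt_def hk psd_diag_ge0.
set w := col k B; set c := (B k k)^-1.
set B' := B - c *: (w *m w^T).
have hc : c * B k k = 1 by rewrite mulVf.
have c0 : 0 < c by rewrite invr_gt0.
have eB : B = B' + c *: (w *m w^T) by rewrite subrK.
have B'E : forall i j, B' i j = B i j - c * (B i k * B j k).
  by move=> i j; rewrite !mxE big_ord1 !mxE.
have hB' : psd B'.
  split.
    apply/matrixP => i j; rewrite mxE !B'E (psd_sym i j hB) (psd_sym _ _ hB); ring.
  move=> x; rewrite -/(bf _ _ _).
  have -> : bf B' x x = bf B x x - c * (bf B x (delta_mx k 0) * bf B x (delta_mx k 0)).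
    rewrite /bf /B' mulmxBr mulmxBl mxE [X in _ + X]mxE; congr (_ - _).
    rewrite -scalemxAr -scalemxAl mxE; congr (_ * _).
    rewrite !mulmxA -(mulmxA (x^T *m w) w^T x) mxE big_ord1.
    rewrite /w colE !mulmxA; congr (_ * _).
    by rewrite trmx_mul (proj1 hB); exact: (bfC _ _ (proj1 hB)).
  have := proj2 hB (x + (- (bf B x (delta_mx k 0)) * c) *: delta_mx k 0).
  rewrite -/(bf _ _ _) bf_exp ?(proj1 hB) // bf_delta.
  set s := bf B x (delta_mx k 0); set q := bf B x x => h.
  have -> : q - c * (s * s) = q + 2 * (- s * c) * s + (- s * c) * (- s * c) * B k k.
    have : q + 2 * (- s * c) * s + (- s * c) * (- s * c) * B k k =
           q - 2 * c * (s * s) + c * (s * s) * (c * B k k) by ring.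
    by rewrite hc => ->; ring.
  exact: h.
have hlt : (nzc B' < nzc B)%N.
  apply: proper_card; apply/properP; split.
    apply/subsetP => j; rewrite !inE => /existsP [i hi].
    apply: contraT => /existsPn hj.
    have z : forall l, B l j = 0 by move=> l; apply/eqP; rewrite -[_ == 0]negbK hj.
    by move: hi; rewrite B'E z (psd_sym j k hB) z !mulr0 subr0 eqxx.
  exists k; rewrite !inE; first by apply/existsP; exists k.
  apply/existsPn => i; rewrite B'E negbK.
  by rewrite mulrCA hc mulr1 subrr.
have [IH1 IH2] := IH B' (ltnSE (leq_trans hlt hn)) hB'.
have trE : \tr (A *m B) = \tr (A *m B') + c * bf A w w.
  rewrite {1}eB mulmxDr mxtraceD -scalemxAr mxtraceZ; congr (_ + c * _).
  by rewrite mulmxA mxtrace_mulC mulmxA tr11.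
have hw : 0 <= bf A w w by exact: (proj2 hA).
split; first by rewrite trE addr_ge0 // mulr_ge0 // ltW.
rewrite trE => /eqP; rewrite (paddr_eq0 IH1 (mulr_ge0 (ltW c0) hw)) => /andP [/eqP t1 /eqP t2].
have AB' := IH2 t1.
have w0 : bf A w w = 0 by move/eqP: t2; rewrite mulf_eq0 gt_eqF //= => /eqP.
have Aw := psd_quad0 hA w0.
by rewrite eB mulmxDr AB' -scalemxAr mulmxA Aw mul0mx scaler0 addr0.
Qed.
End Psd.

Section Bounds.
Variable R : realFieldType.

Lemma lower_bound n r (M : 'M[R]_n) :
  (forall i j : 'I_n, (i < j)%N -> M i j = 0) -> (forall i, M i i != 0) ->
  has_psd_factorization M r -> (n <= r)%N.
Proof.
move=> hlow hdiag [Rs [Cs [hR [hC hM]]]].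
have hz : forall i j : 'I_n, (i < j)%N -> Cs j *m Rs i = 0.
  move=> i j hij; apply: (proj2 (psd_tr (hC j) (hR i))).
  by rewrite mxtrace_mulC -hM hlow.
have hnz : forall i, exists ab : 'I_r * 'I_r, (Cs i *m Rs i) ab.1 ab.2 != 0.
  move=> i; case: (boolP [exists ab : 'I_r * 'I_r, (Cs i *m Rs i) ab.1 ab.2 != 0]) => [/existsP //|/existsPn h].
  have h0 : Cs i *m Rs i = 0.
    apply/matrixP => a b; have /negPn/eqP -> := h (a, b); by rewrite mxE.
  by move: (hdiag i); rewrite hM mxtrace_mulC h0 mxtrace0 eqxx.
have [f hf] := fin_all_exists hnz.
pose U : 'M[R]_(n, r) := \matrix_(i, k) Rs i k (f i).2.
pose V : 'M[R]_(n, r) := \matrix_(j, k) Cs j (f j).1 k.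
have PE : forall i j, (U *m V^T) i j = (Cs j *m Rs i) (f j).1 (f i).2.
  move=> i j; rewrite !mxE; apply: eq_bigr => k _; rewrite !mxE mulrC //.
have hu : U *m V^T \in unitmx.
  rewrite unitmxE unitfE det_trig; last first.
    by apply/is_trig_mxP => i j hij; rewrite PE hz // mxE.
  by apply/prodf_neq0 => i _; rewrite PE.
have := mxrankM_maxl U V^T; rewrite mxrank_unit // => h.
exact: leq_trans h (rank_leq_col U).
Qed.

Lemma psd_diagm r (D : 'M[R]_r) :
  (forall k l, k != l -> D k l = 0) -> (forall k, 0 <= D k k) -> psd D.
Proof.
move=> hoff hd; split.
  apply/matrixP => k l; rewrite mxE.
  by case: (eqVneq k l) => [->|h] //; rewrite !hoff // eq_sym.
move=> x; have -> : (x^T *m D *m x) 0 0 = \sum_k x k 0 * D k k * x k 0.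
  rewrite mxE; apply: eq_bigr => l _; rewrite mxE (bigD1 l) //= big1 ?addr0.
    by rewrite mxE.
  by move=> k hk; rewrite hoff // mulr0.
apply: sumr_ge0 => k _; rewrite mulrC mulrA; apply: mulr_ge0 => //.
by rewrite -expr2 sqr_ge0.
Qed.

Lemma upper_bound n (M : 'M[R]_n) : (forall i j, 0 <= M i j) ->
  has_psd_factorization M n.
Proof.
move=> hM.
exists (fun i => delta_mx i i), (fun j => \matrix_(k, l) (M k j *+ (k == l))).
split; [|split].
- move=> i; apply: psd_diagm => [k l hkl|k]; rewrite mxE ?ler0n //.
  case: eqP => [ek|_] //=; case: eqP => [el|_] //.
  by rewrite ek el eqxx in hkl.
- move=> j; apply: psd_diagm => [k l /negbTE hkl|k]; rewrite mxE ?hkl ?eqxx ?mulr1n //.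
- move=> i j; rewrite -(mul_delta_mx (0 : 'I_1)) -mulmxA mxtrace_mulC -rowE -colE.
  by rewrite tr11 !mxE eqxx mulr1n.
Qed.
End Bounds.

Section Main.
Variables (R : realFieldType) (d : nat).

Lemma MS_ge0 (i j : 'I_d.-1) : 0 <= M_Sigma R d i j.
Proof.
rewrite /M_Sigma mxE /=.
by repeat case: ifP => _; rewrite ?divr_ge0 ?ler0n ?ler01.
Qed.

Lemma MS_low (i j : 'I_d.-1) : (i < j)%N -> M_Sigma R d i j = 0.
Proof. by move=> h; rewrite /M_Sigma mxE /= ltnS h. Qed.

Lemma MS_diag (i : 'I_d.-1) : M_Sigma R d i i != 0.
Proof.
rewrite /M_Sigma mxE /= ltnn eqxx.
case: ifP => _; rewrite mulf_neq0 ?invr_eq0 ?pnatr_eq0 ?muln_eq0 //.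
Qed.

Lemma Mkd_ge0 i j : 0 <= M_kd R d i j.
Proof.
rewrite /M_kd.
case: (split_ordP i) => i' ->; case: (split_ordP j) => j' ->.
- by rewrite block_mxEul MS_ge0.
- by rewrite block_mxEur mxE.
- by rewrite block_mxEdl mxE.
- by rewrite block_mxEdr mxE ler0n.
Qed.

Lemma Mkd_low (i j : 'I_(d.-1 + d * d.-1)) : (i < j)%N -> M_kd R d i j = 0.
Proof.
rewrite /M_kd.
case: (split_ordP i) => i' ->; case: (split_ordP j) => j' -> /= h.
- by rewrite block_mxEul MS_low.
- by rewrite block_mxEur mxE.
- by exfalso; move: h; have := ltn_ord j'; lia.
- rewrite block_mxEdr mxE; case: eqP => [e|] //.
  by move: h; rewrite e ltnn.
Qed.

Lemma Mkd_diag i : M_kd R d i i != 0.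
Proof.
rewrite /M_kd.
case: (split_ordP i) => i' ->.
- by rewrite block_mxEul MS_diag.
- by rewrite block_mxEdr mxE eqxx oner_eq0.
Qed.
End Main.

Unset Implicit Arguments.
Set Strict Implicit.
Theorem mainTheorem11 (R : realType) (d : nat) (hd : (3 <= d)%N) :
  is_psd_rank (M_kd R d) (d ^ 2 - 1)%N.
Proof.
have e : (d ^ 2 - 1 = d.-1 + d * d.-1)%N.
  by case: d hd => [//|k] _ /=; lia.
rewrite e; split.
  by apply: upper_bound => i j; exact: Mkd_ge0.
move=> r' h; apply: (lower_bound _ _ h).
  exact: Mkd_low.
exact: Mkd_diag.
Qed.
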